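(* Let $\widetilde\lambda:\widetilde C\to\widetilde C'$ be a morphism of $\mathcal S$-complexes over $R$, with irreducible component $\lambda:(C,d)\to(C',d')$ and reducible component $\rho:(\mathsf R,r)\to(\mathsf R',r')$. Suppose $\lambda$ is chain homotopic to an isomorphism of chain complexes and $\rho$ is chain homotopic to an isomorphism of chain complexes. Then $\widetilde\lambda$ is $\mathcal S$-chain homotopic to an isomorphism of $\mathcal S$-complexes.
   Context: Let $R$ be a commutative ring. Graded modules are $\mathbb Z$-graded; for a graded module $V$, $V[i]$ denotes the graded module with $V[i]_j=V_{i+j}$; differentials have degree $-1$. An $\mathcal S$-complex over $R$ is a chain complex $(\widetilde C,\widetilde d)$ of finitely generated free graded $R$-modules with a graded decomposition $\widetilde C=C\oplus C[-1]\oplus\mathsf R$ with respect to which $\widetilde d=\begin{pmatrix} d&0&0\\ v&-d&\delta_2\\ \delta_1&0&r\end{pmatrix}$. The chain complexes $(C,d)$ and $(\mathsf R,r)$ are the irreducible and reducible complexes. A morphism $\widetilde\lambda:\widetilde C\to\widetilde C'$ of $\mathcal S$-complexes is a degree $0$ chain map of the form $\begin{pmatrix}\lambda&0&0\\ \mu&\lambda&\Delta_2\\ \Delta_1&0&\rho\end{pmatrix}$; $\lambda$ is its irreducible component and $\rho$ its reducible component (these are chain maps $(C,d)\to(C',d')$ and $(\mathsf R,r)\to(\mathsf R',r')$). An $\mathcal S$-chain homotopy between morphisms $\widetilde\lambda,\widetilde\lambda'$ is a degree $1$ map $\widetilde K$ of the form $\begin{pmatrix}K&0&0\\ L&-K&M_2\\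 M_1&0&J\end{pmatrix}$ with $\widetilde d'\widetilde K+\widetilde K\widetilde d=\widetilde\lambda-\widetilde\lambda'$. An isomorphism of $\mathcal S$-complexes is a morphism which is bijective and whose inverse is a morphism. *)

(* Defs.v *)
From HB Require Import structures.
From mathcomp Require Import all_boot all_order all_algebra.
Set Implicit Arguments. Unset Strict Implicit. Unset Printing Implicit Defensive.
Import GRing.Theory.
Local Open Scope ring_scope.

(* A finitely generated free graded R-module is represented by a finite
   homogeneous basis: a dimension n and the degree (deg i : int) of each basis
   vector i : 'I_n.  A graded map V -> W is a matrix 'M_(dim W, dim V)
   (rows = target basis, columns = source basis); it has degree k when every
   nonzero entry sends a basis vector of degree e to one of degree e + k. *)
Definition homog (R : pzRingType) m n (degT : 'I_m -> int) (degS : 'I_n -> int)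
  (k : int) (f : 'M[R]_(m, n)) : Prop :=
  forall i j, f i j != 0 -> degT i = degS j + k.

(* degrees of the basis of C (+) C[-1] (+) RR; C[-1]_j = C_(j-1), so a basis
   vector of C of degree e has degree e + 1 in C[-1]. *)
Definition sdeg nC nR (degC : 'I_nC -> int) (degR : 'I_nR -> int)
  (i : 'I_(nC + (nC + nR))) : int :=
  match split i with
  | inl a => degC a
  | inr b => match split b with
             | inl c => degC c + 1
             | inr e => degR e
             end
  end.

Definition blk3 (R : pzRingType) m1 m2 m3 n1 n2 n3
  (a : 'M[R]_(m1, n1)) (b : 'M[R]_(m1, n2)) (c : 'M[R]_(m1, n3))
  (d : 'M[R]_(m2, n1)) (e : 'M[R]_(m2, n2)) (f : 'M[R]_(m2, n3))
  (g : 'M[R]_(m3, n1)) (h : 'M[R]_(m3, n2)) (i : 'M[R]_(m3, n3))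
  : 'M[R]_(m1 + (m2 + m3), n1 + (n2 + n3)) :=
  col_mx (row_mx a (row_mx b c))
         (col_mx (row_mx d (row_mx e f)) (row_mx g (row_mx h i))).

Definition Sdiff (R : pzRingType) nC nR (d v : 'M[R]_nC) (d1 : 'M[R]_(nR, nC))
  (d2 : 'M[R]_(nC, nR)) (r : 'M[R]_nR) :=
  blk3 d 0 0 v (- d) d2 d1 0 r.

Record Scomplex (R : comPzRingType) := {
  nC : nat;
  nR : nat;
  degC : 'I_nC -> int;
  degR : 'I_nR -> int;
  sc_d : 'M[R]_nC;
  sc_v : 'M[R]_nC;
  sc_delta1 : 'M[R]_(nR, nC);
  sc_delta2 : 'M[R]_(nC, nR);
  sc_r : 'M[R]_nR;
  sc_homog : homog (sdeg degC degR) (sdeg degC degR) (-1)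
               (Sdiff sc_d sc_v sc_delta1 sc_delta2 sc_r);
  sc_sq : Sdiff sc_d sc_v sc_delta1 sc_delta2 sc_r *m
          Sdiff sc_d sc_v sc_delta1 sc_delta2 sc_r = 0
}.

Arguments degC {R} s _.
Arguments degR {R} s _.

Definition Stot_deg (R : comPzRingType) (X : Scomplex R) :=
  sdeg (degC X) (degR X).
Arguments Stot_deg {R} X _.
Definition Stot_d (R : comPzRingType) (X : Scomplex R) :=
  Sdiff (sc_d X) (sc_v X) (sc_delta1 X) (sc_delta2 X) (sc_r X).

Definition Smap (R : pzRingType) mC mR nC nR
  (lam : 'M[R]_(mC, nC)) (mu : 'M[R]_(mC, nC)) (D1 : 'M[R]_(mR, nC))
  (D2 : 'M[R]_(mC, nR)) (rho : 'M[R]_(mR, nR)) :=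
  blk3 lam 0 0 mu lam D2 D1 0 rho.

Record Smorphism (R : comPzRingType) (X Y : Scomplex R) := {
  sm_lam : 'M[R]_(nC Y, nC X);
  sm_mu : 'M[R]_(nC Y, nC X);
  sm_Delta1 : 'M[R]_(nR Y, nC X);
  sm_Delta2 : 'M[R]_(nC Y, nR X);
  sm_rho : 'M[R]_(nR Y, nR X);
  sm_homog : homog (Stot_deg Y) (Stot_deg X) 0
               (Smap sm_lam sm_mu sm_Delta1 sm_Delta2 sm_rho);
  sm_chain : Stot_d Y *m Smap sm_lam sm_mu sm_Delta1 sm_Delta2 sm_rho =
             Smap sm_lam sm_mu sm_Delta1 sm_Delta2 sm_rho *m Stot_d X
}.

Definition Smor_tot (R : comPzRingType) (X Y : Scomplex R) (F : Smorphism X Y) :=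
  Smap (sm_lam F) (sm_mu F) (sm_Delta1 F) (sm_Delta2 F) (sm_rho F).

Definition S_iso (R : comPzRingType) (X Y : Scomplex R) (F : Smorphism X Y) : Prop :=
  exists G : Smorphism Y X,
    Smor_tot G *m Smor_tot F = 1%:M /\ Smor_tot F *m Smor_tot G = 1%:M.

Definition S_homotopic (R : comPzRingType) (X Y : Scomplex R)
  (F G : Smorphism X Y) : Prop :=
  exists (K L : 'M[R]_(nC Y, nC X)) (M1 : 'M[R]_(nR Y, nC X))
         (M2 : 'M[R]_(nC Y, nR X)) (J : 'M[R]_(nR Y, nR X)),
    let KK := blk3 K 0 0 L (- K) M2 M1 0 J in
    homog (Stot_deg Y) (Stot_deg X) 1 KK /\
    Stot_d Y *m KK + KK *m Stot_d X = Smor_tot F - Smor_tot G.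

Definition chain_map (R : pzRingType) m n (degS : 'I_n -> int) (degT : 'I_m -> int)
  (dS : 'M[R]_n) (dT : 'M[R]_m) (f : 'M[R]_(m, n)) : Prop :=
  homog degT degS 0 f /\ dT *m f = f *m dS.

Definition chain_homotopic (R : pzRingType) m n (degS : 'I_n -> int)
  (degT : 'I_m -> int) (dS : 'M[R]_n) (dT : 'M[R]_m) (f g : 'M[R]_(m, n)) : Prop :=
  exists K : 'M[R]_(m, n),
    homog degT degS 1 K /\ dT *m K + K *m dS = f - g.

Definition chain_iso (R : pzRingType) m n (degS : 'I_n -> int) (degT : 'I_m -> int)
  (dS : 'M[R]_n) (dT : 'M[R]_m) (f : 'M[R]_(m, n)) : Prop :=
  chain_map degS degT dS dT f /\
  exists h : 'M[R]_(n, m),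
    chain_map degT degS dT dS h /\ h *m f = 1%:M /\ f *m h = 1%:M.

(* Main.v *)
Require Import Defs.
From HB Require Import structures.
From mathcomp Require Import all_boot all_order all_algebra.
Set Implicit Arguments. Unset Strict Implicit. Unset Printing Implicit Defensive.
Import GRing.Theory.
Local Open Scope ring_scope.

Section H.
Variable R : comPzRingType.

Lemma homog_mul m n p (dm : 'I_m -> int) (dn : 'I_n -> int) (dp : 'I_p -> int)
  k1 k2 k (A : 'M[R]_(m,n)) (B : 'M[R]_(n,p)) :
  homog dm dn k1 A -> homog dn dp k2 B -> k1 + k2 = k -> homog dm dp k (A *m B).
Proof.
move=> hA hB <- i j; rewrite mxE => nz.
case: (boolP [exists l, (A i l != 0) && (B l j != 0)]) => [/existsP [l /andP [h1 h2]]|/existsPn H].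
  by rewrite (hA _ _ h1) (hB _ _ h2) -addrA (addrC k2).
rewrite big1 ?eqxx // in nz => l _; move: (H l); rewrite negb_and !negbK.
by case/orP => /eqP ->; rewrite ?mul0r ?mulr0.
Qed.

Lemma homog_add m n (dm : 'I_m -> int) (dn : 'I_n -> int) k (A B : 'M[R]_(m,n)) :
  homog dm dn k A -> homog dm dn k B -> homog dm dn k (A + B).
Proof.
move=> hA hB i j; rewrite mxE => nz.
case: (boolP (A i j == 0)) => [/eqP hz|]; last exact: hA.
by apply: hB; rewrite hz add0r in nz.
Qed.

Lemma homog_opp m n (dm : 'I_m -> int) (dn : 'I_n -> int) k (A : 'M[R]_(m,n)) :
  homog dm dn k A -> homog dm dn k (- A).
Proof. by move=> hA i j; rewrite mxE oppr_eq0; exact: hA. Qed.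

Lemma homog0 m n (dm : 'I_m -> int) (dn : 'I_n -> int) k :
  homog dm dn k (0 : 'M[R]_(m,n)).
Proof. by move=> i j; rewrite mxE eqxx. Qed.

Definition sum3 n1 n2 n3 (d1 : 'I_n1 -> int) (d2 : 'I_n2 -> int) (d3 : 'I_n3 -> int)
  (i : 'I_(n1 + (n2 + n3))) : int :=
  match split i with
  | inl a => d1 a
  | inr b => match split b with
             | inl c => d2 c
             | inr e => d3 e
             end
  end.

Lemma homog_blk3 m1 m2 m3 n1 n2 n3 (t1 : 'I_m1 -> int) (t2 : 'I_m2 -> int) (t3 : 'I_m3 -> int)
  (s1 : 'I_n1 -> int) (s2 : 'I_n2 -> int) (s3 : 'I_n3 -> int) k
  (a : 'M[R]_(m1, n1)) (b : 'M[R]_(m1, n2)) (c : 'M[R]_(m1, n3))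
  (d : 'M[R]_(m2, n1)) (e : 'M[R]_(m2, n2)) (f : 'M[R]_(m2, n3))
  (g : 'M[R]_(m3, n1)) (h : 'M[R]_(m3, n2)) (i : 'M[R]_(m3, n3)) :
  homog t1 s1 k a -> homog t1 s2 k b -> homog t1 s3 k c ->
  homog t2 s1 k d -> homog t2 s2 k e -> homog t2 s3 k f ->
  homog t3 s1 k g -> homog t3 s2 k h -> homog t3 s3 k i ->
  homog (sum3 t1 t2 t3) (sum3 s1 s2 s3) k (blk3 a b c d e f g h i).
Proof.
move=> ha hb hc hd he hf hg hh hi x y.
rewrite /blk3 /sum3 /col_mx /row_mx !mxE.
case: (split x) => [x1|x2]; rewrite ?mxE; last case: (split x2) => [x3|x4]; rewrite ?mxE;
case: (split y) => [y1|y2]; rewrite ?mxE; try case: (split y2) => [y3|y4]; rewrite ?mxE; by auto.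
Qed.

Lemma blk3_mul m1 m2 m3 n1 n2 n3 p1 p2 p3
  (a : 'M[R]_(m1, n1)) (b : 'M[R]_(m1, n2)) (c : 'M[R]_(m1, n3))
  (d : 'M[R]_(m2, n1)) (e : 'M[R]_(m2, n2)) (f : 'M[R]_(m2, n3))
  (g : 'M[R]_(m3, n1)) (h : 'M[R]_(m3, n2)) (i : 'M[R]_(m3, n3))
  (a' : 'M[R]_(n1, p1)) (b' : 'M[R]_(n1, p2)) (c' : 'M[R]_(n1, p3))
  (d' : 'M[R]_(n2, p1)) (e' : 'M[R]_(n2, p2)) (f' : 'M[R]_(n2, p3))
  (g' : 'M[R]_(n3, p1)) (h' : 'M[R]_(n3, p2)) (i' : 'M[R]_(n3, p3)) :
  blk3 a b c d e f g h i *m blk3 a' b' c' d' e' f' g' h' i' =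
  blk3 (a *m a' + (b *m d' + c *m g')) (a *m b' + (b *m e' + c *m h')) (a *m c' + (b *m f' + c *m i'))
       (d *m a' + (e *m d' + f *m g')) (d *m b' + (e *m e' + f *m h')) (d *m c' + (e *m f' + f *m i'))
       (g *m a' + (h *m d' + i *m g')) (g *m b' + (h *m e' + i *m h')) (g *m c' + (h *m f' + i *m i')).
Proof.
by rewrite /blk3 !mul_col_mx !mul_row_col !mul_mx_row !add_row_mx.
Qed.

Lemma blk3_add m1 m2 m3 n1 n2 n3
  (a : 'M[R]_(m1, n1)) (b : 'M[R]_(m1, n2)) (c : 'M[R]_(m1, n3))
  (d : 'M[R]_(m2, n1)) (e : 'M[R]_(m2, n2)) (f : 'M[R]_(m2, n3))
  (g : 'M[R]_(m3, n1)) (h : 'M[R]_(m3, n2)) (i : 'M[R]_(m3, n3))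
  (a' : 'M[R]_(m1, n1)) (b' : 'M[R]_(m1, n2)) (c' : 'M[R]_(m1, n3))
  (d' : 'M[R]_(m2, n1)) (e' : 'M[R]_(m2, n2)) (f' : 'M[R]_(m2, n3))
  (g' : 'M[R]_(m3, n1)) (h' : 'M[R]_(m3, n2)) (i' : 'M[R]_(m3, n3)) :
  blk3 a b c d e f g h i + blk3 a' b' c' d' e' f' g' h' i' =
  blk3 (a + a') (b + b') (c + c') (d + d') (e + e') (f + f') (g + g') (h + h') (i + i').
Proof. by rewrite /blk3 !add_col_mx !add_row_mx. Qed.

Lemma blk3_opp m1 m2 m3 n1 n2 n3
  (a : 'M[R]_(m1, n1)) (b : 'M[R]_(m1, n2)) (c : 'M[R]_(m1, n3))
  (d : 'M[R]_(m2, n1)) (e : 'M[R]_(m2, n2)) (f : 'M[R]_(m2, n3))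
  (g : 'M[R]_(m3, n1)) (h : 'M[R]_(m3, n2)) (i : 'M[R]_(m3, n3)) :
  - blk3 a b c d e f g h i = blk3 (-a) (-b) (-c) (-d) (-e) (-f) (-g) (-h) (-i).
Proof. by rewrite /blk3 !opp_col_mx !opp_row_mx. Qed.

Lemma blk3_1 n1 n2 n3 :
  (1%:M : 'M[R]_(n1 + (n2 + n3))) = blk3 1%:M 0 0 0 1%:M 0 0 0 1%:M.
Proof.
rewrite /blk3 scalar_mx_block (scalar_mx_block n2 n3) /block_mx.
rewrite -[0 : 'M_(n1, n2+n3)]row_mx0 -[0 : 'M_(n2+n3, n1)]col_mx0.
by rewrite -(block_mxEv 0 _ 0 _) block_mxEh.
Qed.


Lemma homog_shift m n (dm : 'I_m -> int) (dn : 'I_n -> int) k (A : 'M[R]_(m,n)) :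
  homog dm dn k A -> homog (fun i => dm i + 1) (fun j => dn j + 1) k A.
Proof. by move=> hA i j /hA ->; rewrite -!addrA (addrC k). Qed.

Lemma homog_inv m n (dm : 'I_m -> int) (dn : 'I_n -> int) (G : 'M[R]_(m,n)) (T : 'M[R]_(n,m)) :
  homog dm dn 0 G -> T *m G = 1%:M -> G *m T = 1%:M -> homog dn dm 0 T.
Proof.
move=> hG TG GT i j nz.
rewrite addr0; apply/eqP; apply/negPn/negP => ne.
pose k := dn i - dm j.
pose P := \matrix_(a, b) if dn a == dm b + k then T a b else (0 : R).
have GP : G *m P = 0.
  apply/matrixP => a b.
  have -> : (G *m P) a b = if dm a == dm b + k then (G *m T) a b else 0.
    rewrite !mxE; case: ifP => hab; [apply: eq_bigr|rewrite big1 //] => l _;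
    rewrite mxE; case: (eqVneq (G a l) 0) => [->|/hG]; rewrite ?mul0r // addr0 => hal.
      by rewrite -hal hab.
    by rewrite -hal hab mulr0.
  rewrite GT !mxE; case: ifP => // /eqP hab; case: (eqVneq a b) => [eab|]; last by rewrite mulr0n.
  move: hab; rewrite eab => hab.
  have k0 : k = 0 by apply: (@addrI _ (dm b)); rewrite addr0 -hab.
  by move/eqP: k0; rewrite subr_eq0 (negbTE ne).
have P0 : P = 0 by rewrite -[P]mul1mx -TG -mulmxA GP mulmx0.
move/matrixP/(_ i j): P0; rewrite !mxE.
have -> : dn i == dm j + k by rewrite /k addrC subrK.
by move=> e; rewrite e eqxx in nz.
Qed.

End H.
Theorem lemma2p3 (R : comPzRingType) (X Y : Scomplex R) (F : Smorphism X Y) :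
  (exists g : 'M[R]_(nC Y, nC X),
     chain_iso (degC X) (degC Y) (sc_d X) (sc_d Y) g /\
     chain_homotopic (degC X) (degC Y) (sc_d X) (sc_d Y) (sm_lam F) g) ->
  (exists g : 'M[R]_(nR Y, nR X),
     chain_iso (degR X) (degR Y) (sc_r X) (sc_r Y) g /\
     chain_homotopic (degR X) (degR Y) (sc_r X) (sc_r Y) (sm_rho F) g) ->
  exists G : Smorphism X Y, S_iso G /\ S_homotopic F G.
Proof.
move=> [g [[[hg cg] [gi [[hgi cgi] [gig ggi]]]] [K [hK eK]]]].
move=> [h [[[hh ch] [hi [[hhi chi] [hih hhi']]]] [J [hJ eJ]]]].
pose KK : 'M[R]_(nC Y + (nC Y + nR Y), nC X + (nC X + nR X)) :=
  blk3 K 0 0 0 (- K) 0 0 0 J.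
have hKK : homog (Stot_deg Y) (Stot_deg X) 1 KK.
  change (homog (sum3 (degC Y) (fun c => degC Y c + 1) (degR Y))
                (sum3 (degC X) (fun c => degC X c + 1) (degR X)) 1 KK).
  apply: homog_blk3; rewrite ?homog0 //; try exact: homog0.
  exact/homog_opp/homog_shift.
pose D := Stot_d Y *m KK + KK *m Stot_d X.
have hD : homog (Stot_deg Y) (Stot_deg X) 0 D.
  apply: homog_add.
    apply: (@homog_mul _ _ _ _ _ _ _ (-1) 1); [idtac|exact: hKK|by []]. exact (@sc_homog R Y).
  apply: (@homog_mul _ _ _ _ _ _ _ 1 (-1)); [exact: hKK|exact (@sc_homog R X)|by []].
have eD : D = blk3 (sc_d Y *m K + K *m sc_d X) 0 0
    (sc_v Y *m K - K *m sc_v X) (sc_d Y *m K + K *m sc_d X)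
    (sc_delta2 Y *m J - K *m sc_delta2 X)
    (sc_delta1 Y *m K + J *m sc_delta1 X) 0 (sc_r Y *m J + J *m sc_r X).
  rewrite /D /Stot_d /Sdiff /KK !blk3_mul blk3_add.
  congr blk3; rewrite ?mul0mx ?mulmx0 ?add0r ?addr0 ?mulNmx ?mulmxN ?opprK //.
set muG := sm_mu F - (sc_v Y *m K - K *m sc_v X).
set D1G := sm_Delta1 F - (sc_delta1 Y *m K + J *m sc_delta1 X).
set D2G := sm_Delta2 F - (sc_delta2 Y *m J - K *m sc_delta2 X).
have eG : Smap g muG D1G D2G h = Smor_tot F - D.
  rewrite eD /Smor_tot /Smap blk3_opp blk3_add.
  congr blk3; rewrite ?oppr0 ?addr0 ?eK ?eJ ?opprB ?(addrC (sm_lam F)) ?(addrC (sm_rho F)) ?subrK //.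
clearbody muG D1G D2G.
have hG : homog (Stot_deg Y) (Stot_deg X) 0 (Smap g muG D1G D2G h).
  rewrite eG; apply: homog_add; first exact: (@sm_homog R X Y F).
  exact: homog_opp.
have cG : Stot_d Y *m Smap g muG D1G D2G h = Smap g muG D1G D2G h *m Stot_d X.
  rewrite eG mulmxBr mulmxBl (sm_chain F); congr (_ - _).
  rewrite /D mulmxDr mulmxDl !mulmxA (sc_sq Y) mul0mx add0r -!mulmxA (sc_sq X) mulmx0 addr0 //.
pose GG := Build_Smorphism hG cG.
exists GG; split; last first.
  exists K, 0, 0, 0, J; cbv zeta; split; first exact: hKK.
  rewrite /GG /Smor_tot /= -/(Smor_tot F) eG opprB addrCA subrr addr0 //.
set E2 := - (gi *m D2G *m hi).
set E1 := - (hi *m D1G *m gi).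
set mT := - ((gi *m muG + E2 *m D1G) *m gi).
have TG : Smap gi mT E1 E2 hi *m Smap g muG D1G D2G h = 1%:M.
  rewrite /Smap blk3_mul blk3_1.
  congr blk3; rewrite ?mul0mx ?mulmx0 ?add0r ?addr0 //.
  - by rewrite /mT mulNmx -mulmxA gig mulmx1 addNr.
  - by rewrite /E2 mulNmx -mulmxA hih mulmx1 addrN.
  - by rewrite /E1 mulNmx -mulmxA gig mulmx1 addNr.
have GT : Smap g muG D1G D2G h *m Smap gi mT E1 E2 hi = 1%:M.
  rewrite /Smap blk3_mul blk3_1.
  congr blk3; rewrite ?mul0mx ?mulmx0 ?add0r ?addr0 //.
  - rewrite /mT /E1 /E2; rewrite !(mulmxN, mulNmx, mulmxDr, mulmxDl, opprD, opprK, mulmxA, ggi, mul1mx).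
    by rewrite addrK subrr.
  - by rewrite /E2 mulmxN !mulmxA ggi mul1mx addNr.
  - by rewrite /E1 mulmxN !mulmxA hhi' mul1mx addrN.
pose T : 'M[R]_(nC X + (nC X + nR X), nC Y + (nC Y + nR Y)) := Smap gi mT E1 E2 hi.
have hT : homog (Stot_deg X) (Stot_deg Y) 0 T := homog_inv hG TG GT.
have cT : Stot_d X *m T = T *m Stot_d Y.
  rewrite -[Stot_d X *m T]mul1mx -TG -/T -!mulmxA (mulmxA (Smap g muG D1G D2G h)) -cG.
  by rewrite !mulmxA -(mulmxA _ _ T) GT mulmx1.
exists (Build_Smorphism hT cT); split; rewrite /Smor_tot /=.
  exact: TG.
exact: GT.
Qed.
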